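(* Let $V$ be an $n$-dimensional vector space over a field of characteristic zero, let $A^{a_1\dots a_p}$ and $B_{a_1\dots a_p}$ be $p$-forms with $A$ simple, and assume $n\neq 2p$. Let $T=T^a{}_b\{A,B\}=A^{ac_2\dots c_p}B_{bc_2\dots c_p}-\frac{1}{2p}A^{c_1\dots c_p}B_{c_1\dots c_p}\delta^a_b$. Then for every positive integer $k$, $$[T^k]=\begin{cases}\dfrac{n}{(n-2p)^k}[T]^k & \text{if $k$ is even},\\[2mm] \dfrac{1}{(n-2p)^{k-1}}[T]^k & \text{if $k$ is odd}.\end{cases}$$
   Context: Index-free notation: $T^k$ is the $k$-fold composition of the $(1,1)$-tensor $T^a{}_b$ with itself and $[X]=X^c{}_c$ denotes the trace. A $p$-form $A$ is simple if $A^{a_1\dots a_p}=u^{[a_1}\cdots w^{a_p]}$ for some vectors $u,\dots,w$. No metric is assumed. *)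

(* Defs.v *)
From HB Require Import structures.
From mathcomp Require Import all_boot all_order all_algebra all_fingroup.
Set Implicit Arguments. Unset Strict Implicit. Unset Printing Implicit Defensive.
Import Order.TTheory GRing.Theory Num.Theory.
Local Open Scope ring_scope.

(* Components of a rank-p tensor on an n-dimensional space, in a fixed basis.
   Only the values on index sequences of length p are meaningful. *)
Definition tensor (F : Type) (n : nat) := seq 'I_n -> F.

Definition alternating (F : pzRingType) (n p : nat) (A : tensor F n) : Prop :=
  forall (s : p.-tuple 'I_n) (sigma : 'S_p),
    A [tuple tnth s (sigma i) | i < p] = (-1) ^+ (odd_perm sigma) * A s.

Definition simple (F : fieldType) (n p : nat) (A : tensor F n) : Prop :=
  exists u : 'I_p -> 'I_n -> F,
    forall s : p.-tuple 'I_n,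
      A s = (p`!%:R)^-1 *
            \sum_(sigma : 'S_p) (-1) ^+ (odd_perm sigma) *
               \prod_(i < p) u i (tnth s (sigma i)).

Definition Tmat (F : fieldType) (n p : nat) (A B : tensor F n) : 'M[F]_n :=
  \matrix_(a < n, b < n)
    (\sum_(c : (p.-1).-tuple 'I_n) A (a :: c) * B (b :: c)
     - ((2 * p)%:R)^-1 * (\sum_(c : p.-tuple 'I_n) A c * B c) * (a == b)%:R).

(* Main.v *)
Require Import Defs.
From HB Require Import structures.
From mathcomp Require Import all_boot all_order all_algebra all_fingroup.
From mathcomp Require Import ring.
Set Implicit Arguments. Unset Strict Implicit. Unset Printing Implicit Defensive.
Import Order.TTheory GRing.Theory Num.Theory.
Local Open Scope ring_scope.


Section Bh.
Variables (F : fieldType) (n q : nat) (B : tensor F n).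
Hypothesis hchar : [pchar F] =i pred0.
Hypothesis hB : alternating q.+1 B.

Lemma sum_cons (f : q.+1.-tuple 'I_n -> F) :
  \sum_t f t = \sum_a \sum_(c : q.-tuple 'I_n) f [tuple of a :: c].
Proof.
rewrite pair_big /=.
rewrite (reindex (fun x : 'I_n * q.-tuple 'I_n => [tuple of x.1 :: x.2])) //=.
exists (fun t => (thead t, [tuple of behead t])).
  by move=> [a c] _ /=; rewrite theadE; congr pair; apply: val_inj.
by move=> t _ /=; rewrite [RHS]tuple_eta.
Qed.

Definition Bh (w : 'I_q.+1 -> 'I_n -> F) :=
  \sum_(t : q.+1.-tuple 'I_n) (\prod_i w i (tnth t i)) * B t.

Lemma eq_Bh w w' : (forall i a, w i a = w' i a) -> Bh w = Bh w'.
Proof. by move=> h; apply: eq_bigr => t _; congr (_ * _); apply: eq_bigr. Qed.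

Lemma Bh_perm w (s : 'S_q.+1) :
  Bh (fun i => w (s i)) = (-1) ^+ odd_perm s * Bh w.
Proof.
rewrite /Bh mulr_sumr.
rewrite (reindex (fun t : q.+1.-tuple 'I_n => [tuple tnth t (s i) | i < q.+1])) /=.
  apply: eq_bigr => t _.
  rewrite hB mulrCA; congr (_ * (_ * _)).
  rewrite [RHS](reindex_inj (@perm_inj _ s)) /=.
  by apply: eq_bigr => i _; rewrite tnth_mktuple.
exists (fun t : q.+1.-tuple 'I_n => [tuple tnth t ((s^-1)%g i) | i < q.+1]).
  by move=> t _; apply: eq_from_tnth => i; rewrite !tnth_mktuple permKV.
by move=> t _; apply: eq_from_tnth => i; rewrite !tnth_mktuple permK.
Qed.

Lemma Bh_dup w (i j : 'I_q.+1) : i != j -> (forall a, w i a = w j a) -> Bh w = 0.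
Proof.
move=> hij hw.
have h := Bh_perm w (tperm i j).
rewrite odd_tperm hij expr1 mulN1r in h.
have e : Bh (fun k => w (tperm i j k)) = Bh w.
  apply: eq_Bh => k a; case: tpermP => [->|->|] //; by rewrite hw.
rewrite e in h.
have : Bh w *+ 2 = 0 by rewrite mulr2n {1}h addNr.
rewrite -mulr_natr => /eqP; rewrite mulf_eq0 => /orP [/eqP //|].
by move/pcharf0P: hchar => ->.
Qed.

Lemma Bh_split w : Bh w = \sum_a w ord0 a *
   \sum_(c : q.-tuple 'I_n) (\prod_(j < q) w (lift ord0 j) (tnth c j)) * B (a :: c).
Proof.
rewrite /Bh sum_cons; apply: eq_bigr => a _.
rewrite mulr_sumr; apply: eq_bigr => c _.
rewrite big_ord_recl tnth0 -mulrA; congr (_ * (_ * _)).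
by apply: eq_bigr => j _; rewrite tnthS.
Qed.

End Bh.


Lemma aux1 (F : comRingType) (x1 x2 x3 x4 x5 x6 : F) :
  x1*(x2*x3)*(x4*(x5*x6)) = x1*x4*x2*x6*(x3*x5).
Proof. ring. Qed.
Lemma aux2 (F : comRingType) (x y z w b : F) :
  x*x = 1 -> x*y*z*w*(x*b) = true%:R * (y*(z*w))*b.
Proof. move=> h; rewrite mul1r; transitivity (x*x*(y*z*w*b)); [ring | rewrite h; ring]. Qed.

Lemma aux3 (F : comRingType) (x y b : F) : x * 0 = false%:R * y * b.
Proof. by rewrite mulr0 mul0r mul0r. Qed.

Lemma aux4 (F : comRingType) (k f i b S : F) : k*f = i -> k*k*(f*b*S) = b*i*(k*S).
Proof. move=> <-; ring. Qed.

Section Main.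
Variables (F : fieldType) (n q : nat) (A B : tensor F n).
Hypothesis hchar : [pchar F] =i pred0.
Hypothesis hB : alternating q.+1 B.
Variable u : 'I_q.+1 -> 'I_n -> F.
Let k : F := (q.+1`!%:R)^-1.
Hypothesis hA : forall s : q.+1.-tuple 'I_n,
  A s = k * \sum_(sigma : 'S_q.+1) (-1) ^+ (odd_perm sigma) *
               \prod_(i < q.+1) u i (tnth s (sigma i)).

Let sg (s : 'S_q.+1) : F := (-1) ^+ odd_perm s.

Lemma A_alt (s : q.+1.-tuple 'I_n) : A s = k * \sum_(sigma : 'S_q.+1) sg sigma *
               \prod_(i < q.+1) u (sigma i) (tnth s i).
Proof.
rewrite hA; congr (_ * _).
rewrite (reindex_inj (@invg_inj _)) /=.
apply: eq_bigr => sigma _; rewrite /sg odd_permV; congr (_ * _).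
rewrite (reindex_inj (@perm_inj _ sigma)) /=.
by apply: eq_bigr => i _; rewrite permK.
Qed.

Let R (s : 'S_q.+1) (b : 'I_n) : F := \sum_(c : q.-tuple 'I_n)
   (\prod_(j < q) u (s (lift ord0 j)) (tnth c j)) * B (b :: c).

Lemma M_entry a b : \sum_(c : q.-tuple 'I_n) A (a :: c) * B (b :: c)
   = k * \sum_(s : 'S_q.+1) sg s * (u (s ord0) a * R s b).
Proof.
transitivity (\sum_(c : q.-tuple 'I_n) A [tuple of a :: c] * B (b :: c)) => //.
under eq_bigr => c _ do rewrite A_alt -mulrA mulr_suml.
rewrite -mulr_sumr; congr (_ * _).
rewrite exchange_big /=; apply: eq_bigr => s _.
rewrite /R !mulr_sumr; apply: eq_bigr => c _.
rewrite big_ord_recl tnth0 !mulrA; congr (_ * _ * _).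
by apply: eq_bigr => j _; rewrite tnthS.
Qed.

Lemma R_contract (s : 'S_q.+1) v : \sum_b R s b * v b =
   Bh B (fun i => if i == ord0 then v else u (s i)).
Proof.
rewrite Bh_split /=; apply: eq_bigr => a _; rewrite mulrC; congr (_ * _).
Qed.

Let beta := Bh B u.

Lemma R_same (s : 'S_q.+1) : \sum_b R s b * u (s ord0) b = sg s * beta.
Proof.
rewrite R_contract -Bh_perm //; apply: eq_Bh => i a.
by case: eqP => [->|].
Qed.

Lemma R_diff (s t : 'S_q.+1) : t ord0 != s ord0 -> \sum_b R s b * u (t ord0) b = 0.
Proof.
move=> hts; rewrite R_contract.
apply: (@Bh_dup _ _ _ _ hchar hB _ ord0 ((s^-1)%g (t ord0))).
  apply/eqP => /(congr1 s); rewrite permKV => h; by rewrite h eqxx in hts.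
move=> a; rewrite eqxx; case: eqP => [h|_]; last by rewrite permKV.
have := congr1 s h; rewrite permKV => h'; by rewrite h' eqxx in hts.
Qed.

Lemma sgsg (s : 'S_q.+1) : sg s * sg s = 1.
Proof. by rewrite /sg -signr_addb addbb expr0. Qed.

Lemma cnt (x : 'I_q.+1) : \sum_(s : 'S_q.+1) ((s ord0 == x)%:R : F) = q`!%:R.
Proof.
have hc y : \sum_(s : 'S_q.+1) ((s ord0 == y)%:R : F) = \sum_(s : 'S_q.+1) ((s ord0 == ord0)%:R : F).
  rewrite (reindex_inj (@mulIg _ (tperm ord0 y))) /=.
  apply: eq_bigr => s _; rewrite permM.
  have -> : (tperm ord0 y (s ord0) == y) = (tperm ord0 y (s ord0) == tperm ord0 y ord0) by rewrite tpermL.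
  by rewrite (inj_eq (@perm_inj _ _)).
have tot : \sum_(x : 'I_q.+1) \sum_(s : 'S_q.+1) ((s ord0 == x)%:R : F) = (q.+1)`!%:R.
  rewrite exchange_big /=.
  transitivity (\sum_(s : 'S_q.+1) (1 : F)).
    apply: eq_bigr => s _.
    rewrite (bigD1 (s ord0)) //= eqxx big1 ?addr0 // => y /negbTE.
    by rewrite eq_sym => ->.
  by rewrite sumr_const card_Sn.
have {}tot : \sum_(x : 'I_q.+1) \sum_(s : 'S_q.+1) ((s ord0 == ord0)%:R : F) = (q.+1)`!%:R.
  by rewrite -tot; apply: eq_bigr => y _; rewrite hc.
rewrite sumr_const card_ord factS natrM in tot.
rewrite hc; apply: (@mulfI _ (q.+1)%:R).
  by move/pcharf0P: hchar => ->.
by rewrite mulr_natl tot ?mulr1.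
Qed.

Definition Mab a b := k * \sum_(s : 'S_q.+1) sg s * (u (s ord0) a * R s b).

Lemma kq : k * q`!%:R = (q.+1)%:R^-1.
Proof.
have h : (q.+1)%:R != 0 :> F by move/pcharf0P: hchar => ->.
have h2 : q`!%:R != 0 :> F by move/pcharf0P: hchar => ->; rewrite -lt0n fact_gt0.
rewrite /k factS natrM invfM mulfVK //.
Qed.

Lemma MM a d : \sum_b Mab a b * Mab b d = (beta / (q.+1)%:R) * Mab a d.
Proof.
rewrite /Mab.
transitivity (k * k * \sum_(s : 'S_q.+1) \sum_(t : 'S_q.+1)
   (sg s * sg t * u (s ord0) a * R t d * \sum_b R s b * u (t ord0) b)).
  under eq_bigr => b _ do rewrite mulrACA mulr_suml.
  rewrite -mulr_sumr; congr (_ * _).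
  rewrite exchange_big /=; apply: eq_bigr => s _.
  under eq_bigr => b _ do rewrite mulr_sumr.
  rewrite exchange_big /=; apply: eq_bigr => t _.
  rewrite mulr_sumr; apply: eq_bigr => b _.
  exact: (aux1 (sg s) (u (s ord0) a) (R s b) (sg t) (u (t ord0) b) (R t d)).
transitivity (k * k * \sum_(t : 'S_q.+1) \sum_(s : 'S_q.+1)
   ((s ord0 == t ord0)%:R * (sg t * (u (t ord0) a * R t d)) * beta)).
  rewrite exchange_big /=; congr (_ * _); apply: eq_bigr => t _.
  apply: eq_bigr => s _.
  have [e|ne] := eqVneq (s ord0) (t ord0).
    rewrite -e R_same.
    exact: (@aux2 _ (sg s) (sg t) (u (s ord0) a) (R t d) beta (sgsg s)).
  rewrite R_diff; [exact: aux3 | by rewrite eq_sym].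
transitivity (k * k * \sum_(t : 'S_q.+1) (q`!%:R * (sg t * (u (t ord0) a * R t d)) * beta)).
  congr (_ * _); apply: eq_bigr => t _.
  by rewrite -mulr_suml -mulr_suml cnt.
under eq_bigr => t _ do rewrite mulrAC.
rewrite -mulr_sumr; exact: aux4 kq.
Qed.
Lemma fin : k * \sum_(s : 'S_q.+1) sg s * (sg s * beta) = beta.
Proof.
under eq_bigr => s _ do rewrite mulrA sgsg mul1r.
rewrite sumr_const card_Sn -mulr_natr mulrCA /k mulVf ?mulr1 //.
by move/pcharf0P: hchar => ->; rewrite -lt0n fact_gt0.
Qed.

Lemma trM : \sum_a Mab a a = beta.
Proof.
rewrite /Mab -mulr_sumr exchange_big /= -[RHS]fin; congr (_ * _).
apply: eq_bigr => s _; rewrite -mulr_sumr -R_same; congr (_ * _).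
by apply: eq_bigr => a _; rewrite mulrC.
Qed.

Lemma S_eq : \sum_(t : q.+1.-tuple 'I_n) A t * B t = beta.
Proof.
under eq_bigr => t _ do rewrite A_alt -mulrA mulr_suml.
rewrite -mulr_sumr exchange_big /= -[RHS]fin; congr (_ * _).
apply: eq_bigr => s _; rewrite -(Bh_perm hB u s) /Bh mulr_sumr.
by apply: eq_bigr => t _; rewrite mulrA.
Qed.

End Main.

Unset Implicit Arguments.
Set Strict Implicit.


Lemma natr_eq0F (F : fieldType) : [pchar F] =i pred0 ->
  forall m n, (m%:R == n%:R :> F) = (m == n).
Proof.
move=> h m n; wlog le : m n / (m <= n)%N.
  move=> W; case: (leqP m n) => H; first exact: W.
  by rewrite eq_sym [(m == n)]eq_sym; apply: W; exact: ltnW.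
rewrite eq_sym -subr_eq0 -natrB //.
move/pcharf0P: h => ->; rewrite subn_eq0 eqn_leq le /=//.
Qed.

Lemma sqpow (F : fieldType) (s D : F) m :
  (s * - D) ^+ m.*2 = s ^+ m.*2 * D ^+ m.*2.
Proof. by rewrite exprMn; congr (_ * _); rewrite -mul2n !exprM sqrrN. Qed.

Lemma alg_odd (F : fieldType) (s D : F) m : D != 0 ->
  s ^+ m.*2 * (s * - D) = (D ^+ m.*2)^-1 * (s * - D) ^+ (m.*2).+1.
Proof.
move=> hD; rewrite exprS sqpow.
have hX : D ^+ m.*2 != 0 by rewrite expf_neq0.
move: hX; set X := D ^+ _; set Y := s ^+ _ => hX.
by field.
Qed.

Lemma alg_even (F : fieldType) (s D N : F) m : D != 0 ->
  s ^+ m.*2 * N = N / D ^+ m.*2 * (s * - D) ^+ m.*2.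
Proof.
move=> hD; rewrite sqpow.
have hX : D ^+ m.*2 != 0 by rewrite expf_neq0.
move: hX; set X := D ^+ _; set Y := s ^+ _ => hX.
by field.
Qed.

Theorem corollary1 (F : fieldType) (n p : nat) (A B : tensor F n) :
  [pchar F] =i pred0 ->
  (0 < p)%N ->
  alternating p A -> alternating p B ->
  simple p A ->
  n <> (2 * p)%N ->
  forall k : nat, (0 < k)%N ->
    \tr (Tmat p A B ^+ k) =
      if ~~ odd k then
        n%:R / (n%:R - (2 * p)%:R) ^+ k * (\tr (Tmat p A B)) ^+ k
      else
        ((n%:R - (2 * p)%:R) ^+ k.-1)^-1 * (\tr (Tmat p A B)) ^+ k.
Proof.
move=> hchar hp _ hB [u hu] hn k hk.
case: p hp hB u hu hn => [//|q] _ hB u hu hn.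
set beta := Bh B u.
set c2 : F := (2 * q.+1)%:R.
set s := beta / c2.
have c2nz : c2 != 0 by rewrite /c2; move/pcharf0P: hchar => ->; rewrite muln_eq0.
set M : 'M[F]_n := \matrix_(a, b) Mab B u a b.
have ME a b : \sum_(c : q.-tuple 'I_n) A (a :: c) * B (b :: c) = Mab B u a b :=
  M_entry B hu a b.
have Tm : Tmat q.+1 A B = M - s%:M.
  apply/matrixP => a b; rewrite !mxE /= ME (S_eq hchar hB hu) -mulr_natr.
  by rewrite mulr_natr mul1r [_^-1 * _]mulrC.
have M2 : M * M = (s + s) *: M.
  rewrite -mulmxE; apply/matrixP => a d; rewrite !mxE.
  under eq_bigr => b _ do rewrite !mxE.
  rewrite (MM hchar hB); congr (_ * _).
  have h2 : (2%:R : F) != 0 by move/pcharf0P: hchar => ->.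
  have hP : ((q.+1)%:R : F) != 0 by move/pcharf0P: hchar => ->.
  rewrite -/beta /s /c2 natrM; field.
  have -> : 1 + q%:R = (q.+1)%:R :> F by rewrite -add1n natrD mulr1n.
  by rewrite h2 hP.
have T2 : Tmat q.+1 A B * Tmat q.+1 A B = (s * s)%:M.
  rewrite Tm mulrBl !mulrBr M2 -!mulmxE mul_scalar_mx mul_mx_scalar -scalar_mxM.
  by rewrite scalerDl addrK opprB addrC subrK.
set T := Tmat q.+1 A B.
have Tev m : T ^+ m.*2 = (s ^+ m.*2)%:M.
  elim: m => [|m IH]; first by rewrite expr0 -scalemx1 scale1r.
  rewrite doubleS !exprS mulrA T2 IH -mulmxE -scalar_mxM.
  by rewrite mulrA.
have trT : \tr T = s * (c2 - n%:R).
  rewrite /T Tm linearB /= mxtrace_scalar -mulr_natr.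
  have -> : \tr M = beta.
    rewrite /mxtrace /beta -(trM hchar hB u); apply: eq_bigr => a _; by rewrite mxE.
  rewrite /s mulrBr divfK //.
  by rewrite mul1r mulr_natr.
have Dnz : n%:R - c2 != 0.
  rewrite subr_eq0 /c2; apply/eqP => /eqP.
  rewrite natr_eq0F // => /eqP; exact: hn.
have kk := odd_double_half k.
case ok: (odd k) kk => kk; rewrite /= -kk ?add1n ?add0n.
  rewrite exprS Tev -mulmxE mul_mx_scalar mxtraceZ trT /=.
  by rewrite -opprB (@alg_odd _ _ _ _ Dnz).
rewrite Tev mxtrace_scalar trT -opprB -[s ^+ _ *+ n]mulr_natr (@alg_even _ _ _ _ _ Dnz).
by rewrite !opprB.
Qed.
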